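(* Let $P$ be a poset such that $\Sigma P$ is an $\omega$ type space. Then $\Sigma\sigma(P)$ is sober.
   Context: For a poset $P$, $\sigma(P)$ is the set of Scott open subsets of $P$ (a set $U$ is Scott open iff it is an upper set and for every directed $D$ whose supremum exists, $\bigvee D\in U$ implies $D\cap U\neq\emptyset$), $\Sigma P=(P,\sigma(P))$, and $\Sigma\sigma(P)$ is the poset $(\sigma(P),\subseteq)$ with its Scott topology. A topological space is an $\omega$ type space if it has a subbase consisting of countable subsets. A $T_0$ space is sober if every irreducible closed set equals $\overline{\{x\}}$ for some point $x$. *)

(* Defs.v *)
From Stdlib Require Import List.

Record poset := Poset {
  carrier :> Type;
  le : carrier -> carrier -> Prop;
  le_refl : forall x, le x x;
  le_trans : forall x y z, le x y -> le y z -> le x z;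
  le_antisym : forall x y, le x y -> le y x -> x = y
}.

Section OrderNotions.
Variables (X : Type) (le : X -> X -> Prop).

Definition upper_set (U : X -> Prop) : Prop :=
  forall x y, le x y -> U x -> U y.

Definition directed (D : X -> Prop) : Prop :=
  (exists x, D x) /\
  forall x y, D x -> D y -> exists z, D z /\ le x z /\ le y z.

Definition is_sup (D : X -> Prop) (s : X) : Prop :=
  (forall d, D d -> le d s) /\
  (forall u, (forall d, D d -> le d u) -> le s u).

Definition scott_open (U : X -> Prop) : Prop :=
  upper_set U /\
  forall (D : X -> Prop) (s : X), directed D -> is_sup D s -> U s ->
    exists d, D d /\ U d.
End OrderNotions.

Definition sigmaP (P : poset) : Type := { U : P -> Prop | @scott_open (carrier P) (@le P) U }.

Definition sigma_le (P : poset) (U V : sigmaP P) : Prop :=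
  forall x, proj1_sig U x -> proj1_sig V x.

Section TopNotions.
Variables (X : Type) (tau : (X -> Prop) -> Prop).

Definition closed (C : X -> Prop) : Prop := tau (fun x => ~ C x).

Definition closure (A : X -> Prop) (y : X) : Prop :=
  forall F, closed F -> (forall x, A x -> F x) -> F y.

Definition T0 : Prop :=
  forall x y, (forall U, tau U -> (U x <-> U y)) -> x = y.

Definition irreducible_closed (C : X -> Prop) : Prop :=
  closed C /\ (exists x, C x) /\
  forall A B, closed A -> closed B -> (forall x, C x -> A x \/ B x) ->
    (forall x, C x -> A x) \/ (forall x, C x -> B x).

Definition sober : Prop :=
  T0 /\ forall C, irreducible_closed C ->
    exists x, forall y, C y <-> closure (fun z => z = x) y.

Definition is_subbase (S : (X -> Prop) -> Prop) : Prop :=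
  (forall A, S A -> tau A) /\
  forall U, tau U -> forall x, U x ->
    exists l : list (X -> Prop),
      Forall (fun A => S A /\ A x) l /\
      (forall y, Forall (fun A => A y) l -> U y).

Definition countable_set (A : X -> Prop) : Prop :=
  exists f : X -> nat, forall x y, A x -> A y -> f x = f y -> x = y.

Definition omega_type : Prop :=
  exists S, is_subbase S /\ forall A, S A -> countable_set A.
End TopNotions.

(* Main.v *)
Require Import Defs.
From Stdlib Require Import List Lia Arith PeanoNat Classical ClassicalEpsilon FunctionalExtensionality PropExtensionality ProofIrrelevance.

Notation SO P := (scott_open (sigmaP P) (sigma_le P)).

Lemma so_ext {X} (r : X -> X -> Prop) (U V : X -> Prop) :
  (forall x, U x <-> V x) -> scott_open X r U -> scott_open X r V.
Proof.
  intros H [Hu Hd]. split.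
  - intros x y Hxy Vx. apply H. apply (Hu x y Hxy). apply H. exact Vx.
  - intros D s HD Hs Vs. destruct (Hd D s HD Hs (proj2 (H s) Vs)) as [d [Dd Ud]].
    exists d. split; [exact Dd | apply H; exact Ud].
Qed.

Lemma so_inter {X} (r : X -> X -> Prop) (U V : X -> Prop) :
  scott_open X r U -> scott_open X r V -> scott_open X r (fun x => U x /\ V x).
Proof.
  intros [Uu Ud] [Vu Vd]. split.
  - intros x y Hxy [Ux Vx]. split; eauto.
  - intros D s HD Hs [Us Vs].
    destruct (Ud D s HD Hs Us) as [d1 [D1 U1]].
    destruct (Vd D s HD Hs Vs) as [d2 [D2 V2]].
    destruct HD as [_ HD]. destruct (HD d1 d2 D1 D2) as [d [Dd [l1 l2]]].
    exists d. split; [exact Dd|]. split; eauto.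
Qed.

Lemma so_union2 {X} (r : X -> X -> Prop) (U V : X -> Prop) :
  scott_open X r U -> scott_open X r V -> scott_open X r (fun x => U x \/ V x).
Proof.
  intros [Uu Ud] [Vu Vd]. split.
  - intros x y Hxy [Ux|Vx]; [left|right]; eauto.
  - intros D s HD Hs [Us|Vs].
    + destruct (Ud D s HD Hs Us) as [d [Dd Ux]]. exists d; auto.
    + destruct (Vd D s HD Hs Vs) as [d [Dd Vx]]. exists d; auto.
Qed.

Lemma so_full {X} (r : X -> X -> Prop) : scott_open X r (fun _ => True).
Proof. split. - intros x y _ _; exact I. - intros D s [[d Dd] _] _ _. exists d; split; auto. Qed.

Lemma so_empty {X} (r : X -> X -> Prop) : scott_open X r (fun _ => False).
Proof. split. - intros x y _ []. - intros D s _ _ []. Qed.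

Lemma so_union_sig (P : poset) (D : sigmaP P -> Prop) :
  scott_open P (@le P) (fun y => exists d, D d /\ proj1_sig d y).
Proof.
  split.
  - intros x y Hxy [d [Dd dx]]. exists d. split; auto.
    exact (proj1 (proj2_sig d) x y Hxy dx).
  - intros E p HE Hp [d [Dd dp]].
    destruct (proj2 (proj2_sig d) E p HE Hp dp) as [e [Ee de]].
    exists e. split; auto. exists d; auto.
Qed.

Lemma sup_union (P : poset) (D : sigmaP P -> Prop) (s : sigmaP P) :
  is_sup (sigmaP P) (sigma_le P) D s ->
  forall x, proj1_sig s x -> exists d, D d /\ proj1_sig d x.
Proof.
  intros [Hub Hl] x Hx.
  pose (u := exist _ _ (so_union_sig P D) : sigmaP P).
  assert (H : sigma_le P s u).
  { apply Hl. intros d Dd z dz. simpl. exists d; auto. }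
  exact (H x Hx).
Qed.

Lemma notle_open (P : poset) (y : sigmaP P) : SO P (fun U => ~ sigma_le P U y).
Proof.
  split.
  - intros U V HUV nU HV. apply nU. intros z Hz. apply HV, HUV, Hz.
  - intros D s HD Hs ns. apply NNPP; intro H.
    apply ns. intros z Hz. destruct (sup_union P D s Hs z Hz) as [d [Dd dz]].
    apply NNPP. intro nz. apply H. exists d. split; [exact Dd|].
    intro Hd. apply nz, Hd, dz.
Qed.

Lemma pt_open (P : poset) (b : P) : SO P (fun U => proj1_sig U b).
Proof.
  split.
  - intros U V HUV Ub. apply HUV, Ub.
  - intros D s HD Hs Hb. destruct (sup_union P D s Hs b Hb) as [d [Dd db]].
    exists d; auto.
Qed.

Lemma closed_lower (P : poset) (F : sigmaP P -> Prop) :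
  closed (sigmaP P) (SO P) F -> forall U V, sigma_le P U V -> F V -> F U.
Proof.
  intros HF U V HUV FV. apply NNPP. intro nFU. exact (proj1 HF U V HUV nFU FV).
Qed.

Lemma count_union X (A B : X -> Prop) :
  countable_set X A -> countable_set X B -> countable_set X (fun x => A x \/ B x).
Proof.
  intros [fa Ha] [fb Hb].
  exists (fun x => if excluded_middle_informative (A x) then 2 * fa x else S (2 * fb x)).
  intros x y Hx Hy E.
  destruct (excluded_middle_informative (A x)) as [Ax|nAx];
  destruct (excluded_middle_informative (A y)) as [Ay|nAy].
  - apply Ha; auto; lia.
  - exfalso; lia.
  - exfalso; lia.
  - apply Hb; [destruct Hx; tauto | destruct Hy; tauto | lia].
Qed.

Lemma Kn_open (P : poset) (Bp : P -> Prop) (f : P -> nat)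
  (finj : forall x y, Bp x -> Bp y -> f x = f y -> x = y) n :
  SO P (fun U => forall b, Bp b -> f b < n -> proj1_sig U b).
Proof.
  split.
  - intros U V HUV HU b Bb fb. apply HUV, HU; auto.
  - induction n as [|n IH]; intros D s HD Hs Hsn.
    + destruct HD as [[d Dd] _]. exists d. split; auto. intros; lia.
    + destruct (IH D s HD Hs) as [d1 [D1 H1]].
      { intros b Bb fb. apply Hsn; auto. }
      destruct (classic (exists b, Bp b /\ f b = n)) as [[b [Bb fb]] | nex].
      * destruct (sup_union P D s Hs b (Hsn b Bb ltac:(lia))) as [d2 [D2 H2]].
        destruct (proj2 HD d1 d2 D1 D2) as [d3 [D3 [l1 l2]]].
        exists d3. split; auto. intros b' Bb' fb'.
        destruct (Nat.eq_dec (f b') n) as [e|ne].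
        -- assert (b' = b) by (apply finj; auto; lia). subst. apply l2, H2.
        -- apply l1, H1; auto; lia.
      * exists d1. split; auto. intros b' Bb' fb'. apply H1; auto.
        destruct (Nat.eq_dec (f b') n) as [e|ne]; [exfalso; apply nex; eauto | lia].
Qed.

Lemma core (P : poset) (C : sigmaP P -> Prop) (B : sigmaP P) (f : P -> nat) :
  irreducible_closed (sigmaP P) (SO P) C ->
  (forall x, proj1_sig B x -> exists V, C V /\ proj1_sig V x) ->
  (forall x y, proj1_sig B x -> proj1_sig B y -> f x = f y -> x = y) ->
  C B.
Proof.
  intros Hirr HW finj.
  set (Bp := proj1_sig B).
  assert (step2 : forall n, exists V, C V /\ forall b, Bp b -> f b < n -> proj1_sig V b).
  { induction n as [|n [V1 [CV1 H1]]].
    - destruct Hirr as [_ [[V CV] _]]. exists V; split; auto; intros; lia.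
    - destruct (classic (exists b, Bp b /\ f b = n)) as [[b [Bb fb]] | nex].
      + destruct (HW b Bb) as [V2 [CV2 H2]].
        apply NNPP; intro Hno.
        destruct Hirr as [_ [_ Hir]].
        set (A1 := fun U : sigmaP P => ~ forall b', Bp b' -> f b' < n -> proj1_sig U b').
        set (A2 := fun U : sigmaP P => ~ proj1_sig U b).
        assert (cA1 : closed _ (SO P) A1).
        { unfold closed. eapply so_ext; [| apply (Kn_open P Bp f finj n)].
          intros U. unfold A1. split; [intros H HH; exact (HH H) | intros H; apply NNPP; exact H]. }
        assert (cA2 : closed _ (SO P) A2).
        { unfold closed. eapply so_ext; [| apply (pt_open P b)].
          intros U. unfold A2. split; [intros H HH; exact (HH H) | intros H; apply NNPP; exact H]. }
        destruct (Hir A1 A2 cA1 cA2) as [HA|HA].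
        * intros U CU. destruct (classic (A1 U)) as [a|a]; [left; exact a|right].
          intro Ub. apply Hno. exists U. split; auto. intros b' Bb' fb'.
          destruct (Nat.eq_dec (f b') n) as [e|ne].
          -- assert (b' = b) by (apply finj; auto; lia). subst. exact Ub.
          -- unfold A1 in a. apply NNPP in a. apply a; auto; lia.
        * exact (HA V1 CV1 H1).
        * exact (HA V2 CV2 H2).
      + exists V1. split; auto. intros b' Bb' fb'. apply H1; auto.
        destruct (Nat.eq_dec (f b') n) as [e|ne]; [exfalso; apply nex; eauto | lia]. }
  pose (Vs := fun l => proj1_sig (constructive_indefinite_description _ (step2 l))).
  assert (HVs : forall l, C (Vs l) /\ forall b, Bp b -> f b < l -> proj1_sig (Vs l) b).
  { intro l. unfold Vs. exact (proj2_sig (constructive_indefinite_description _ (step2 l))). }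
  set (T := fun k x => Bp x /\ forall l, k <= l -> proj1_sig (Vs l) x).
  assert (Topen : forall k, scott_open P (@le P) (T k)).
  { intro k. split.
    - intros x y Hxy [Bx Hx]. split.
      + exact (proj1 (proj2_sig B) x y Hxy Bx).
      + intros l Hl. exact (proj1 (proj2_sig (Vs l)) x y Hxy (Hx l Hl)).
    - intros E p HE Hp [Bpp Hpl].
      destruct (proj2 (proj2_sig B) E p HE Hp Bpp) as [d0 [E0 B0]].
      assert (Hm : forall m, exists d, E d /\ @le P d0 d /\
                 forall l, k <= l -> l < m -> proj1_sig (Vs l) d).
      { induction m as [|m [d [Ed [ld Hd]]]].
        - exists d0. split; auto. split; [apply le_refl | intros; lia].
        - destruct (le_lt_dec k m) as [km|km].
          + destruct (proj2 (proj2_sig (Vs m)) E p HE Hp (Hpl m km)) as [d' [Ed' Hd']].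
            destruct (proj2 HE d d' Ed Ed') as [d'' [Ed'' [l1 l2]]].
            exists d''. split; auto. split; [eapply le_trans; eauto|].
            intros l kl lm. destruct (Nat.eq_dec l m) as [e|ne].
            * subst. exact (proj1 (proj2_sig (Vs m)) d' d'' l2 Hd').
            * exact (proj1 (proj2_sig (Vs l)) d d'' l1 (Hd l kl ltac:(lia))).
          + exists d. split; auto. split; auto. intros l kl lm. apply Hd; lia. }
      destruct (Hm (S (f d0))) as [d [Ed [ld Hd]]].
      exists d. split; auto. split.
      + exact (proj1 (proj2_sig B) d0 d ld B0).
      + intros l kl. destruct (le_lt_dec (S (f d0)) l) as [h|h].
        * apply (proj1 (proj2_sig (Vs l)) d0 d ld). apply (proj2 (HVs l)); auto.
        * apply Hd; auto. }
  set (Dfam := fun U : sigmaP P => exists k, forall x, proj1_sig U x <-> T k x).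
  assert (Tmono : forall k k' x, k <= k' -> T k x -> T k' x).
  { intros k k' x kk [Bx Hx]. split; auto. intros l Hl. apply Hx. lia. }
  assert (Hdir : directed (sigmaP P) (sigma_le P) Dfam).
  { split.
    - exists (exist _ _ (Topen 0)). exists 0. intro x; simpl; tauto.
    - intros U1 U2 [k1 H1] [k2 H2].
      exists (exist _ _ (Topen (Nat.max k1 k2))). split; [exists (Nat.max k1 k2); intro; simpl; tauto|].
      split; intros x Hx; simpl.
      + apply (Tmono k1); [lia|]. apply H1, Hx.
      + apply (Tmono k2); [lia|]. apply H2, Hx. }
  assert (Hsup : is_sup (sigmaP P) (sigma_le P) Dfam B).
  { split.
    - intros U [k Hk] x Hx. apply Hk in Hx. exact (proj1 Hx).
    - intros u Hu x Bx. 
      apply (Hu (exist _ _ (Topen (S (f x))))).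
      + exists (S (f x)). intro; simpl; tauto.
      + simpl. split; auto. intros l Hl. apply (proj2 (HVs l)); auto. }
  apply NNPP. intro nCB.
  destruct (proj2 (proj1 Hirr) Dfam B Hdir Hsup nCB) as [U [[k Hk] nCU]].
  apply nCU. apply (closed_lower P C (proj1 Hirr) U (Vs k)).
  - intros x Hx. apply Hk in Hx. apply (proj2 Hx). lia.
  - exact (proj1 (HVs k)).
Qed.

Lemma forall_open (P : poset) (S : (P -> Prop) -> Prop) (l : list (P -> Prop)) :
  (forall A, S A -> scott_open P (@le P) A) ->
  Forall (fun A => S A) l ->
  scott_open P (@le P) (fun y => Forall (fun A => A y) l).
Proof.
  intros HS Hl. induction Hl as [|a l Ha Hl IH].
  - eapply so_ext; [|apply (so_full (@le P))]. intro x; split; auto.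
  - eapply so_ext; [|apply (so_inter _ _ _ (HS a Ha) IH)].
    intro x; split; [intros [h1 h2]; constructor; auto | intro H; inversion H; auto].
Qed.

Theorem corollary4p9 (P : poset) :
  @omega_type (carrier P) (@scott_open (carrier P) (@le P)) ->
  @sober (sigmaP P) (@scott_open (sigmaP P) (@sigma_le P)).
Proof.
  intros [S [[HSo HSb] HSc]]. split.
  - intros x y H.
    assert (Hxy : sigma_le P x y).
    { pose proof (H _ (notle_open P y)) as Hy. apply NNPP. intro n.
      apply (proj1 Hy n). intros z; auto. }
    assert (Hyx : sigma_le P y x).
    { pose proof (H _ (notle_open P x)) as Hx. apply NNPP. intro n.
      apply (proj2 Hx n). intros z; auto. }
    destruct x as [X hX], y as [Y hY]; simpl in *.
    assert (X = Y).
    { apply functional_extensionality; intro z; apply propositional_extensionality; split; [apply Hxy | apply Hyx]. }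
    subst. f_equal. apply proof_irrelevance.
  - intros C HC.
    set (W := fun x : P => exists V, C V /\ proj1_sig V x).
    pose (w := exist _ W (so_union_sig P C) : sigmaP P).
    assert (CW : C w).
    { destruct (classic (exists V, C V /\ forall x, proj1_sig V x)) as [[V [CV HV]]|nfull].
      - apply (closed_lower P C (proj1 HC) w V); auto. intros x _; auto.
      - assert (Hsub : forall x, W x -> exists S', S S' /\ S' x).
        { intros x [V [CV Vx]].
          destruct (HSb (proj1_sig V) (proj2_sig V) x Vx) as [l [Hl Hi]].
          destruct l as [|a l].
          - exfalso. apply nfull. exists V. split; auto.
          - inversion Hl as [|? ? [Sa ax]]. exists a; auto. }
        set (Dfam := fun U : sigmaP P => (forall x, proj1_sig U x -> W x) /\
                                          countable_set P (proj1_sig U)).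
        assert (Hdir : directed (sigmaP P) (sigma_le P) Dfam).
        { split.
          - exists (exist _ _ (so_empty (@le P))). split; [simpl; tauto|].
            exists (fun _ => 0). simpl; tauto.
          - intros U1 U2 [W1 C1] [W2 C2].
            exists (exist _ _ (so_union2 _ _ _ (proj2_sig U1) (proj2_sig U2))).
            split; [split|].
            + simpl. intros x [h|h]; auto.
            + apply count_union; auto.
            + split; intros x Hx; simpl; auto. }
        assert (Hsup : is_sup (sigmaP P) (sigma_le P) Dfam w).
        { split.
          - intros U [HU _] x Hx. apply HU, Hx.
          - intros u Hu x Wx.
            destruct (Hsub x Wx) as [S' [HS' S'x]].
            destruct (HSb W (so_union_sig P C) x Wx) as [l [Hl Hi]].
            assert (Hlo : scott_open P (@le P) (fun y => S' y /\ Forall (fun A => A y) l)).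
            { apply so_inter; [apply HSo; auto|].
              apply (forall_open P S); auto.
              eapply Forall_impl; [|exact Hl]. intros A [SA _]; exact SA. }
            apply (Hu (exist _ _ Hlo)).
            + split.
              * intros y [_ Hy]. apply Hi, Hy.
              * destruct (HSc S' HS') as [g Hg]. exists g.
                intros a b [Sa _] [Sb _]. apply Hg; auto.
            + simpl. split; auto.
              eapply Forall_impl; [|exact Hl]. intros A [_ Ax]; exact Ax. }
        apply NNPP. intro nCw.
        destruct (proj2 (proj1 HC) Dfam w Hdir Hsup nCw) as [U [[HUW [g Hg]] nCU]].
        apply nCU. apply (core P C U g HC); auto. }
    exists w. intros y. split.
    + intros Cy F cF HF. apply (closed_lower P F cF y w).
      * intros z Hz. exists y; auto.
      * apply HF; reflexivity.
    + intros Hcl. apply (closed_lower P C (proj1 HC) y w); auto.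
      apply Hcl.
      * exact (notle_open P w).
      * intros x ->. intros z; auto.
Qed.
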